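(* Let $n\ge 1$ be an integer and let $p,q$ be integers with $1\le p<q$, and set $\nu=-n+\frac{p}{q}$ (so $\nu<0$ is a non-integer rational and $n=\lfloor|\nu-1|\rfloor$). Then for every complex $z$ with $0<|z|<1$, $$\mathrm{B}(\nu,0,z)=-\sum_{k=0}^{q-1}\exp\!\left(-\frac{2\pi i p k}{q}\right)\log\!\left(1-z^{1/q}\exp\!\left(\frac{2\pi i k}{q}\right)\right)+\sum_{k=1}^{n}\frac{z^{p/q-k}}{p/q-k}.$$
   Context: For $|z|<1$ (with $z\neq 0$ when $\operatorname{Re}\nu\le 0$) and $\nu\in\mathbb{C}\setminus\{0,-1,-2,\dots\}$, define $\mathrm{B}(\nu,0,z):=\sum_{k=0}^{\infty}\frac{z^{k+\nu}}{k+\nu}$, where $z^{k+\nu}:=z^{k}z^{\nu}$ and $z^{\nu}=\exp(\nu\operatorname{Log} z)$ uses the principal branch. All powers $z^{1/q}$, $z^{p/q-k}:=z^{p/q}z^{-k}$ and logarithms denote principal branches. *)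

(* Defs.v *)
From Stdlib Require Import Reals.
From Coquelicot Require Import Coquelicot.

Open Scope C_scope.

Definition Cexp_pr (z : C) : C :=
  (exp (Re z) * cos (Im z), exp (Re z) * sin (Im z))%R.

(* principal argument in (-PI, PI] (atan2 convention), Arg_pr 0 = 0 *)
Definition Arg_pr (z : C) : R :=
  let x := Re z in let y := Im z in
  if Rlt_dec 0 x then atan (y / x)
  else if Rlt_dec x 0 then
    (if Rle_dec 0 y then atan (y / x) + PI else atan (y / x) - PI)%R
  else if Rlt_dec 0 y then (PI / 2)%R
  else if Rlt_dec y 0 then (- (PI / 2))%R
  else 0%R.

Definition Clog_pr (z : C) : C := (ln (Cmod z), Arg_pr z).

(* principal power z^w = exp(w Log z) for z <> 0 (value at 0 irrelevant here) *)
Definition Cpow_pr (z w : C) : C :=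
  if Ceq_dec z 0 then 0 else Cexp_pr (w * Clog_pr z).

(* general term of B(nu,0,z): z^(k+nu)/(k+nu) with z^(k+nu) := z^k z^nu *)
Definition B_term (nu z : C) (k : nat) : C :=
  pow_n z k * Cpow_pr z nu / (RtoC (INR k) + nu).

(* Main.v *)
Require Import Defs.
From Stdlib Require Import Reals.
From Coquelicot Require Import Coquelicot.
From Stdlib Require Import Lra Lia.
Open Scope C_scope.
Ltac toC := match goal with |- ?a = ?b => change (@eq C a b) end.

Lemma Cexp_add (u v : C) : Cexp_pr (u + v) = Cexp_pr u * Cexp_pr v.
Proof.
  destruct u as [a b], v as [c d]; unfold Cexp_pr, Cmult, Cplus; simpl.
  rewrite exp_plus, cos_plus, sin_plus. f_equal; ring.
Qed.

Lemma Cexp_0 : Cexp_pr 0 = 1.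
Proof. unfold Cexp_pr, RtoC; simpl. rewrite exp_0, cos_0, sin_0. f_equal; ring. Qed.

Lemma Cexp_nat (m : nat) (u : C) : Cexp_pr (RtoC (INR m) * u) = pow_n (Cexp_pr u) m.
Proof.
  induction m as [|m IH].
  - change (INR 0) with 0%R. replace (RtoC 0 * u) with (RtoC 0) by ring. apply Cexp_0.
  - rewrite S_INR. replace (RtoC (INR m + 1) * u) with (u + RtoC (INR m) * u).
    + rewrite Cexp_add, IH. reflexivity.
    + rewrite RtoC_plus. ring.
Qed.

Lemma Cmod_Cexp (u : C) : Cmod (Cexp_pr u) = exp (Re u).
Proof.
  destruct u as [a b]; unfold Cexp_pr, Cmod, Re, Im; cbn [fst snd].
  idtac.
  replace ((exp a * cos b) ^ 2 + (exp a * sin b) ^ 2)%R with (exp a ^ 2)%R.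
  - rewrite sqrt_pow2; [reflexivity| left; apply exp_pos].
  - pose proof (sin2_cos2 b). unfold Rsqr in H. nra.
Qed.

Lemma Cexp_Clog (z : C) : z <> 0 -> Cexp_pr (Clog_pr z) = z.
Proof.
  intros Hz. destruct z as [x y].
  assert (Hm : (0 < Cmod (x, y))%R) by (apply Cmod_gt_0; auto).
  assert (Hm2 : (Cmod (x,y) ^ 2 = x^2 + y^2)%R) by (rewrite Cmod2_alt; reflexivity).
  unfold Cexp_pr, Clog_pr; simpl. rewrite exp_ln by auto.
  set (M := Cmod (x,y)) in *.
  assert (Gen : (x <> 0)%R -> (M * cos (atan (y/x)) = Rabs x /\ M * sin (atan (y/x)) = Rabs x * (y / x))%R).
  { intros Hx. set (A := atan (y/x)).
    assert (Hc : (0 < cos A)%R).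
    { apply cos_gt_0; pose proof (atan_bound (y/x)); unfold A; lra. }
    assert (Hs : (sin A = cos A * (y/x))%R).
    { pose proof (tan_atan (y/x)) as Ht. fold A in Ht. unfold tan in Ht.
      rewrite <- Ht. field. lra. }
    pose proof (sin2_cos2 A) as H2. unfold Rsqr in H2.
    assert (K : (cos A * cos A * (x^2 + y^2) = x^2)%R).
    { replace (cos A * cos A * (x^2 + y^2))%R
        with (x^2 * ((cos A * (y/x)) * (cos A * (y/x)) + cos A * cos A))%R by (field; auto).
      rewrite <- Hs, H2. ring. }
    assert (HMc : ((M * cos A)^2 = x^2)%R).
    { replace ((M * cos A)^2)%R with (cos A * cos A * M^2)%R by ring.
      rewrite Hm2. exact K. }
    assert (HMcpos : (0 < M * cos A)%R) by nra.
    assert (E : (M * cos A = Rabs x)%R).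
    { apply Rabs_pos_lt in Hx as Hax. pose proof (pow2_abs x). nra. }
    split; auto. rewrite Hs, <- E. ring. }
  unfold Arg_pr, Re, Im; cbn [fst snd].
  destruct (Rlt_dec 0 x) as [Hx|Hx].
  { destruct (Gen ltac:(lra)) as [E1 E2]. rewrite Rabs_pos_eq in E1, E2 by lra.
    rewrite E1, E2. f_equal. field. lra. }
  destruct (Rlt_dec x 0) as [Hx'|Hx'].
  { destruct (Gen ltac:(lra)) as [E1 E2]. rewrite Rabs_left in E1, E2 by lra.
    destruct (Rle_dec 0 y).
    - rewrite neg_cos, neg_sin. f_equal.
      + rewrite <- Ropp_mult_distr_r, E1. ring.
      + rewrite <- Ropp_mult_distr_r, E2. field. lra.
    - rewrite cos_minus, sin_minus, cos_PI, sin_PI. f_equal.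
      + replace (M * (cos (atan (y / x)) * -1 + sin (atan (y / x)) * 0))%R
          with (- (M * cos (atan (y/x))))%R by ring. rewrite E1. ring.
      + replace (M * (sin (atan (y / x)) * -1 - cos (atan (y / x)) * 0))%R
          with (- (M * sin (atan (y/x))))%R by ring. rewrite E2. field. lra. }
  assert (x = 0)%R by lra. subst x.
  assert (y <> 0)%R by (intro; apply Hz; subst; reflexivity).
  destruct (Rlt_dec 0 y).
  { rewrite cos_PI2, sin_PI2. f_equal; [ring|]. rewrite Rmult_1_r. nra. }
  destruct (Rlt_dec y 0); [|lra].
  rewrite cos_neg, sin_neg, cos_PI2, sin_PI2. f_equal; [ring|]. nra.
Qed.

Lemma sum_n_Re (a : nat -> C) N : Re (sum_n a N) = sum_n (fun l => Re (a l)) N.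
Proof.
  induction N as [|N IH]. - rewrite !sum_O. reflexivity.
  - rewrite !sum_Sn, <- IH. reflexivity.
Qed.
Lemma sum_n_Im (a : nat -> C) N : Im (sum_n a N) = sum_n (fun l => Im (a l)) N.
Proof.
  induction N as [|N IH]. - rewrite !sum_O. reflexivity.
  - rewrite !sum_Sn, <- IH. reflexivity.
Qed.

Lemma is_series_C (a : nat -> C) (A B : R) :
  is_series (fun l => Re (a l)) A -> is_series (fun l => Im (a l)) B ->
  is_series a (A, B).
Proof.
  intros HA HB. unfold is_series in *.
  apply filterlim_locally. intros eps.
  pose proof (proj1 (filterlim_locally _ _) HA eps) as HA'.
  pose proof (proj1 (filterlim_locally _ _) HB eps) as HB'.
  generalize (filter_and _ _ HA' HB'). apply filter_imp.
  intros N [H1 H2]. rewrite <- sum_n_Re in H1. rewrite <- sum_n_Im in H2.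
  split; assumption.
Qed.

Lemma is_series_Re (a : nat -> C) (L : C) :
  is_series a L -> is_series (fun l => Re (a l)) (Re L).
Proof.
  intros HA. unfold is_series in *.
  apply filterlim_locally. intros eps.
  pose proof (proj1 (filterlim_locally _ _) HA eps) as HA'.
  revert HA'. apply filter_imp. intros N [H1 H2]. rewrite <- sum_n_Re. exact H1.
Qed.
Lemma is_series_Im (a : nat -> C) (L : C) :
  is_series a L -> is_series (fun l => Im (a l)) (Im L).
Proof.
  intros HA. unfold is_series in *.
  apply filterlim_locally. intros eps.
  pose proof (proj1 (filterlim_locally _ _) HA eps) as HA'.
  revert HA'. apply filter_imp. intros N [H1 H2]. rewrite <- sum_n_Im. exact H2.
Qed.

Lemma Cmod_pow_n (y : C) k : Cmod (pow_n y k) = (Cmod y ^ k)%R.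
Proof.
  induction k as [|k IH]. - simpl. apply Cmod_1.
  - simpl. change (mult y (pow_n y k)) with (y * pow_n y k). rewrite Cmod_mult, IH. reflexivity.
Qed.

Lemma is_series_geomC (y : C) : (Cmod y < 1)%R ->
  is_series (fun l => pow_n y l) (/ (1 - y)).
Proof.
  intros Hy.
  assert (H1y : 1 - y <> 0).
  { intro E. assert (y = 1) by (rewrite <- (Cplus_0_l y), <- E; ring).
    subst. rewrite Cmod_1 in Hy. lra. }
  assert (Hs : forall N, sum_n (fun l => pow_n y l) N = (1 - pow_n y (S N)) / (1 - y)).
  { induction N as [|N IH].
    - rewrite sum_O. change (pow_n y 0) with (RtoC 1). change (pow_n y 1) with (y * RtoC 1).
      match goal with |- ?a = ?b => change (@eq C a b) end. field. auto.
    - rewrite sum_Sn, IH. change (plus ?a ?b) with (Cplus a b).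
      change (pow_n y (S (S N))) with (y * pow_n y (S N)).
      change (pow_n y (S N)) with (y * pow_n y N).
      match goal with |- ?a = ?b => change (@eq C a b) end. field. auto. }
  unfold is_series. apply filterlim_locally_ball_norm. intros eps.
  assert (Hc : (0 < Cmod (1 - y))%R) by (apply Cmod_gt_0; auto).
  assert (Hg := is_lim_seq_geom (Cmod y) ltac:(rewrite Rabs_pos_eq; auto; apply Cmod_ge_0)).
  assert (He : (0 < eps * Cmod (1 - y))%R) by (apply Rmult_lt_0_compat; [apply cond_pos|auto]).
  pose proof (proj1 (filterlim_locally _ _) Hg (mkposreal _ He)) as Hg'.
  destruct Hg' as [N0 HN0]. exists N0. intros N HN.
  specialize (HN0 (S N) ltac:(lia)).
  unfold ball_norm. rewrite Hs.
  change (norm (minus ((1 - pow_n y (S N)) / (1 - y)) (/ (1 - y)))) with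
    (Cmod ((1 - pow_n y (S N)) / (1 - y) - / (1 - y))).
  replace ((1 - pow_n y (S N)) / (1 - y) - / (1 - y)) with (- (pow_n y (S N) / (1 - y))) by (field; auto).
  rewrite Cmod_opp.
  unfold Cdiv. rewrite Cmod_mult, Cmod_inv, Cmod_pow_n by auto.
  cbn in HN0. unfold AbsRing_ball, abs, minus, plus, opp in HN0; simpl in HN0.
  rewrite Ropp_0, Rplus_0_r, Rabs_pos_eq in HN0 by (apply Rmult_le_pos; [apply Cmod_ge_0|apply pow_le, Cmod_ge_0]).
  apply (Rmult_lt_reg_r (Cmod (1 - y))); auto. rewrite Rmult_assoc, Rinv_l by lra. simpl. lra.
Qed.

Lemma Re_div_R (u : C) (c : R) : (c <> 0)%R -> Re (u / RtoC c) = (Re u / c)%R.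
Proof. intros Hc. unfold Cdiv. rewrite <- RtoC_inv by auto. destruct u; unfold Re, Cmult, RtoC; simpl. field. auto. Qed.
Lemma Im_div_R (u : C) (c : R) : (c <> 0)%R -> Im (u / RtoC c) = (Im u / c)%R.
Proof. intros Hc. unfold Cdiv. rewrite <- RtoC_inv by auto. destruct u; unfold Im, Cmult, RtoC; simpl. field. auto. Qed.

Lemma pow_n_mult_C (u v : C) k : pow_n (u * v) k = pow_n u k * pow_n v k.
Proof.
  induction k as [|k IH]. - change (RtoC 1 = RtoC 1 * RtoC 1). ring.
  - change (u * v * pow_n (u * v) k = (u * pow_n u k) * (v * pow_n v k)). rewrite IH. ring.
Qed.

Lemma pow_n_RtoC (t : R) k : pow_n (RtoC t) k = RtoC (t ^ k).
Proof.
  induction k as [|k IH]. - reflexivity.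
  - change (RtoC t * pow_n (RtoC t) k = RtoC (t * t ^ k)). rewrite IH, RtoC_mult. reflexivity.
Qed.

Lemma geom_t (x : C) (t : R) : (Cmod x < 1)%R -> (Rabs t <= 1)%R ->
  is_series (fun l => pow_n x (S l) * RtoC (t ^ l)) (x / (1 - RtoC t * x)).
Proof.
  intros Hx Ht.
  assert (Hy : (Cmod (RtoC t * x) < 1)%R).
  { rewrite Cmod_mult, Cmod_R. pose proof (Cmod_ge_0 x). nra. }
  pose proof (is_series_scal x _ _ (is_series_geomC _ Hy)) as H.
  eapply is_series_ext; [|exact H].
  intros l. simpl. change (scal x (pow_n (RtoC t * x) l)) with (x * pow_n (RtoC t * x) l).
  rewrite pow_n_mult_C, pow_n_RtoC. change (mult x (pow_n x l)) with (x * pow_n x l). toC. ring.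
Qed.

Lemma Cmod_R_le (x : C) : (Rabs (Re x) <= Cmod x)%R /\ (Rabs (Im x) <= Cmod x)%R.
Proof. split; [apply re_le_Cmod |].
  rewrite <- sqrt_Rsqr_abs. unfold Cmod. apply sqrt_le_1_alt. destruct x as [a b]. unfold Rsqr, Im; simpl. nra. Qed.

Lemma Re_mult_R (u : C) (c : R) : Re (u * RtoC c) = (Re u * c)%R.
Proof. destruct u; unfold Re, Cmult, RtoC; simpl. ring. Qed.
Lemma Im_mult_R (u : C) (c : R) : Im (u * RtoC c) = (Im u * c)%R.
Proof. destruct u; unfold Im, Cmult, RtoC; simpl. ring. Qed.

Lemma Re_geom (x : C) (t : R) : (0 < 1 - t * Re x)%R ->
  Re (x / (1 - RtoC t * x)) = ((Re x - t * (Re x ^ 2 + Im x ^ 2)) / ((1 - t * Re x) ^ 2 + (t * Im x) ^ 2))%R.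
Proof.
  destruct x as [a b]; unfold Re, Im; simpl. intros H.
  unfold Cdiv, Cinv, Cmult, Cminus, Cplus, Copp, RtoC; simpl. field. nra.
Qed.
Lemma Im_geom (x : C) (t : R) : (0 < 1 - t * Re x)%R ->
  Im (x / (1 - RtoC t * x)) = (Im x / ((1 - t * Re x) ^ 2 + (t * Im x) ^ 2))%R.
Proof.
  destruct x as [a b]; unfold Re, Im; simpl. intros H.
  unfold Cdiv, Cinv, Cmult, Cminus, Cplus, Copp, RtoC; simpl. field. nra.
Qed.

Lemma radius_bound (c : nat -> R) (rho r : R) : (0 <= rho)%R -> (0 <= r)%R -> (rho * r <= 1)%R ->
  (forall n, Rabs (c n) <= rho ^ n)%R -> Rbar_le r (CV_radius c).
Proof.
  intros H0 H1 H2 Hc. destruct (CV_radius_bounded c) as [Hub _]. apply Hub.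
  exists 1%R. intros n. rewrite Rabs_mult, <- RPow_abs, (Rabs_pos_eq r) by auto.
  apply Rle_trans with (rho ^ n * r ^ n)%R.
  - apply Rmult_le_compat_r; [apply pow_le; auto| apply Hc].
  - rewrite <- Rpow_mult_distr. rewrite <- (pow1 n). apply pow_incr. split; [nra|auto].
Qed.

Lemma zero_derive_const (F : R -> R) : (forall t, 0 <= t <= 1 -> is_derive F t 0)%R -> F 1%R = F 0%R.
Proof.
  intros HF. destruct (MVT_gen F 0 1 (fun _ => 0%R)) as [c [_ Hc]].
  - intros t. rewrite Rmin_left, Rmax_right by lra. intros Ht. apply HF. lra.
  - intros t. rewrite Rmin_left, Rmax_right by lra. intros Ht.
    apply continuity_pt_filterlim. apply (@ex_derive_continuous R_AbsRing R_NormedModule F t). eexists. apply HF. lra.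
  - lra.
Qed.

Lemma log_series (x : C) : (Cmod x < 1)%R ->
  is_series (fun l => pow_n x (S l) / RtoC (INR (S l))) (- Clog_pr (1 - x)).
Proof.
  intros Hx. destruct (Cmod_R_le x) as [Ha Hb].
  set (a := Re x) in *. set (b := Im x) in *.
  assert (Ha' : (Rabs a < 1)%R) by lra.
  set (aR := fun l => match l with 0 => 0%R | S m => (Re (pow_n x (S m)) / INR (S m))%R end).
  set (aI := fun l => match l with 0 => 0%R | S m => (Im (pow_n x (S m)) / INR (S m))%R end).
  pose proof (Cmod_ge_0 x) as Hx0.
  set (r := (2 / (1 + Cmod x))%R).
  assert (Hr1 : (1 < r)%R).
  { unfold r. apply (Rmult_lt_reg_r (1 + Cmod x)); [lra|].
    unfold Rdiv. rewrite Rmult_assoc, Rinv_l by lra. lra. }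
  assert (Hxr : (Cmod x * r <= 1)%R).
  { unfold r. apply (Rmult_le_reg_r (1 + Cmod x)); [lra|].
    unfold Rdiv. replace (Cmod x * (2 * / (1 + Cmod x)) * (1 + Cmod x))%R
      with (Cmod x * 2 * (/ (1 + Cmod x) * (1 + Cmod x)))%R by ring.
    rewrite Rinv_l by lra. lra. }
  assert (Hcoef : forall (f : C -> R), (forall y, Rabs (f y) <= Cmod y)%R ->
     forall n, (Rabs (match n with 0 => 0%R | S m => (f (pow_n x (S m)) / INR (S m))%R end) <= Cmod x ^ n)%R).
  { intros f Hf [|m].
    - rewrite Rabs_R0. simpl. lra.
    - assert (HS : (1 <= INR (S m))%R) by (rewrite S_INR; pose proof (pos_INR m); lra).
      unfold Rdiv. rewrite Rabs_mult, Rabs_inv, (Rabs_pos_eq (INR (S m))) by lra.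
      rewrite <- Cmod_pow_n. apply Rle_trans with (Rabs (f (pow_n x (S m))) * 1)%R.
      + apply Rmult_le_compat_l; [apply Rabs_pos|]. rewrite <- Rinv_1. apply Rinv_le_contravar; lra.
      + rewrite Rmult_1_r. apply Hf. }
  assert (HradR : forall t, (Rabs t <= 1)%R -> Rbar_lt (Rabs t) (CV_radius aR)).
  { intros t Ht. apply Rbar_lt_le_trans with (Finite r). simpl; lra.
    apply (radius_bound _ (Cmod x)); auto. lra. apply (Hcoef Re). intros; apply re_le_Cmod. }
  assert (HradI : forall t, (Rabs t <= 1)%R -> Rbar_lt (Rabs t) (CV_radius aI)).
  { intros t Ht. apply Rbar_lt_le_trans with (Finite r). simpl; lra.
    apply (radius_bound _ (Cmod x)); auto. lra. apply (Hcoef Im). intros; apply Cmod_R_le. }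
  assert (HdR : forall l, PS_derive aR l = Re (pow_n x (S l))).
  { intros l. unfold PS_derive, aR. field. apply not_0_INR. lia. }
  assert (HdI : forall l, PS_derive aI l = Im (pow_n x (S l))).
  { intros l. unfold PS_derive, aI. field. apply not_0_INR. lia. }
  assert (Hpos : forall t, (0 <= t <= 1)%R -> (0 < 1 - t * a)%R).
  { intros t Ht. assert (Rabs (t * a) < 1)%R.
    { rewrite Rabs_mult. rewrite Rabs_pos_eq by lra. pose proof (Rabs_pos a). nra. }
    apply Rabs_def2 in H. lra. }
  assert (Hgeo : forall t, (0 <= t <= 1)%R -> is_series (fun l => pow_n x (S l) * RtoC (t ^ l)) (x / (1 - RtoC t * x))).
  { intros t Ht. apply geom_t; auto. rewrite Rabs_pos_eq; lra. }
  set (D := fun t => ((1 - t * a) ^ 2 + (t * b) ^ 2)%R).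
  assert (HR1 : (PSeries aR 1 + ln (D 1%R) / 2 = 0)%R).
  { set (F := fun t => (PSeries aR t + ln (D t) / 2)%R).
    change (F 1%R = 0%R).
    rewrite (zero_derive_const F).
    - unfold F, D. rewrite PSeries_0. simpl. replace ((1 - 0 * a) * ((1 - 0 * a) * 1) + 0 * b * (0 * b * 1))%R with 1%R by ring.
      rewrite ln_1. unfold aR. field.
    - intros t Ht.
      assert (H1 := is_derive_PSeries aR t (HradR t ltac:(rewrite Rabs_pos_eq; lra))).
      assert (Hv : PSeries (PS_derive aR) t = Re (x / (1 - RtoC t * x))).
      { apply is_pseries_unique. apply is_pseries_R.
        eapply is_series_ext; [|apply (is_series_Re _ _ (Hgeo t Ht))].
        intros l. cbv beta. rewrite Re_mult_R, HdR. reflexivity. }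
      rewrite Hv, Re_geom in H1 by (apply Hpos; auto). fold a b in H1.
      pose proof (Hpos t Ht).
      assert (H2 : is_derive (fun t => ln (D t) / 2)%R t (- ((a - t * (a ^ 2 + b ^ 2)) / ((1 - t * a) ^ 2 + (t * b) ^ 2)))%R).
      { unfold D. auto_derive.
        - nra.
        - field. nra. }
      pose proof (is_derive_plus _ _ _ _ _ H1 H2) as H3.
      replace 0%R with (plus ((a - t * (a ^ 2 + b ^ 2)) / ((1 - t * a) ^ 2 + (t * b) ^ 2))
                  (- ((a - t * (a ^ 2 + b ^ 2)) / ((1 - t * a) ^ 2 + (t * b) ^ 2))))%R
        by (unfold plus; simpl; ring).
      exact H3. }
  assert (HI1 : (PSeries aI 1 + atan (- (1 * b) / (1 - 1 * a)) = 0)%R).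
  { set (F := fun t => (PSeries aI t + atan (- (t * b) / (1 - t * a)))%R).
    change (F 1%R = 0%R).
    rewrite (zero_derive_const F).
    - unfold F. rewrite PSeries_0. replace (- (0 * b) / (1 - 0 * a))%R with 0%R by (field; lra).
      rewrite atan_0. unfold aI. ring.
    - intros t Ht.
      assert (H1 := is_derive_PSeries aI t (HradI t ltac:(rewrite Rabs_pos_eq; lra))).
      assert (Hv : PSeries (PS_derive aI) t = Im (x / (1 - RtoC t * x))).
      { apply is_pseries_unique. apply is_pseries_R.
        eapply is_series_ext; [|apply (is_series_Im _ _ (Hgeo t Ht))].
        intros l. cbv beta. rewrite Im_mult_R, HdI. reflexivity. }
      rewrite Hv, Im_geom in H1 by (apply Hpos; auto). fold a b in H1.
      pose proof (Hpos t Ht).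
      assert (H2 : is_derive (fun t => atan (- (t * b) / (1 - t * a)))%R t (- (b / ((1 - t * a) ^ 2 + (t * b) ^ 2)))%R).
      { auto_derive.
        - lra.
        - field. split; nra. }
      pose proof (is_derive_plus _ _ _ _ _ H1 H2) as H3.
      replace 0%R with (plus (b / ((1 - t * a) ^ 2 + (t * b) ^ 2))
                  (- (b / ((1 - t * a) ^ 2 + (t * b) ^ 2))))%R
        by (unfold plus; simpl; ring).
      exact H3. }
  assert (SR : is_series (fun l => aR (S l)) (PSeries aR 1)).
  { apply is_series_incr_1. match goal with |- is_series _ ?L => replace L with (PSeries aR 1)
      by (symmetry; apply Rplus_0_r) end.
    assert (H := PSeries_correct aR 1 (CV_radius_inside aR 1 (HradR 1%R ltac:(rewrite Rabs_R1; lra)))).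
    apply is_pseries_R in H. eapply is_series_ext; [|exact H]. intros n. cbv beta. rewrite pow1. apply Rmult_1_r. }
  assert (SI : is_series (fun l => aI (S l)) (PSeries aI 1)).
  { apply is_series_incr_1. match goal with |- is_series _ ?L => replace L with (PSeries aI 1)
      by (symmetry; apply Rplus_0_r) end.
    assert (H := PSeries_correct aI 1 (CV_radius_inside aI 1 (HradI 1%R ltac:(rewrite Rabs_R1; lra)))).
    apply is_pseries_R in H. eapply is_series_ext; [|exact H]. intros n. cbv beta. rewrite pow1. apply Rmult_1_r. }
  assert (E : - Clog_pr (1 - x) = (PSeries aR 1, PSeries aI 1)).
  { assert (Ea : Re (1 - x) = (1 - 1 * a)%R) by (unfold a; destruct x; simpl; ring).
    assert (Eb : Im (1 - x) = (- (1 * b))%R) by (unfold b; destruct x; simpl; ring).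
    assert (HD : (0 < D 1%R)%R) by (pose proof (Hpos 1%R ltac:(lra)); unfold D; nra).
    assert (Ecm : Cmod (1 - x) = sqrt (D 1%R)).
    { unfold Cmod. fold (Re (1 - x)) (Im (1 - x)). rewrite Ea, Eb. unfold D. f_equal. ring. }
    assert (Earg : Arg_pr (1 - x) = atan (- (1 * b) / (1 - 1 * a))).
    { unfold Arg_pr. rewrite Ea, Eb. pose proof (Hpos 1%R ltac:(lra)).
      destruct (Rlt_dec 0 (1 - 1 * a)); [reflexivity|lra]. }
    unfold Clog_pr, Copp. rewrite Ecm, Earg. simpl.
    assert (Hln : ln (sqrt (D 1%R)) = (ln (D 1%R) / 2)%R).
    { rewrite <- (sqrt_sqrt (D 1%R)) at 2 by lra. rewrite ln_mult by (apply sqrt_lt_R0; lra). field. }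
    rewrite Hln. f_equal; lra. }
  rewrite E. apply is_series_C.
  - eapply is_series_ext; [|exact SR]. intros l. cbv beta. rewrite Re_div_R by (apply not_0_INR; lia). reflexivity.
  - eapply is_series_ext; [|exact SI]. intros l. cbv beta. rewrite Im_div_R by (apply not_0_INR; lia). reflexivity.
Qed.

Lemma geom_finite (y : C) N : sum_n (fun k => pow_n y k) N * (1 - y) = 1 - pow_n y (S N).
Proof.
  induction N as [|N IH].
  - rewrite sum_O. change (RtoC 1 * (1 - y) = 1 - y * RtoC 1). ring.
  - rewrite sum_Sn. change (Cplus (sum_n (fun k => pow_n y k) N) (pow_n y (S N)) * (1 - y) = 1 - y * pow_n y (S N)).
    rewrite Cmult_plus_distr_r, IH. ring.
Qed.

Lemma sum_n_const_C (c : C) N : sum_n (fun _ => c) N = RtoC (INR (S N)) * c.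
Proof.
  induction N as [|N IH].
  - rewrite sum_O. simpl. toC. ring.
  - rewrite sum_Sn, IH. change (RtoC (INR (S N)) * c + c = RtoC (INR (S (S N))) * c).
    rewrite (S_INR (S N)), RtoC_plus. ring.
Qed.

Lemma Cexp_2PI_nat (c : nat) : Cexp_pr (RtoC (2 * PI * INR c) * Ci) = 1.
Proof.
  replace (RtoC (2 * PI * INR c) * Ci) with (RtoC (INR c) * (RtoC (2 * PI) * Ci)).
  - rewrite Cexp_nat.
    replace (Cexp_pr (RtoC (2 * PI) * Ci)) with (RtoC 1).
    + clear. induction c as [|c IH]; [reflexivity|]. change (RtoC 1 * pow_n (RtoC 1) c = 1). rewrite IH. ring.
    + unfold Cexp_pr, Cmult, RtoC, Ci; simpl.
      replace (2 * PI * 0 - 0 * 1)%R with 0%R by ring.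
      replace (2 * PI * 1 + 0 * 0)%R with (2 * PI)%R by ring.
      rewrite exp_0, cos_2PI, sin_2PI. f_equal; ring.
  - rewrite !RtoC_mult. ring.
Qed.

Lemma root_sum (q M : nat) : (1 <= q)%nat ->
  sum_n (fun k => Cexp_pr (RtoC (2 * PI * INR k * INR M / INR q) * Ci)) (q - 1)
  = if Nat.eqb (M mod q) 0 then RtoC (INR q) else RtoC 0.
Proof.
  intros Hq. assert (Hq0 : INR q <> 0%R) by (apply not_0_INR; lia).
  set (y := Cexp_pr (RtoC (2 * PI * INR M / INR q) * Ci)).
  assert (Ht : forall k, Cexp_pr (RtoC (2 * PI * INR k * INR M / INR q) * Ci) = pow_n y k).
  { intros k. unfold y. rewrite <- Cexp_nat. f_equal.
    rewrite Cmult_assoc, <- RtoC_mult. f_equal. f_equal. field. auto. }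
  rewrite (sum_n_ext _ _ _ Ht).
  assert (Hdec : M = (q * (M / q) + M mod q)%nat) by (apply Nat.div_mod; lia).
  assert (Hlt : (M mod q < q)%nat) by (apply Nat.mod_upper_bound; lia).
  set (c := (M / q)%nat) in *. set (d := (M mod q)%nat) in *.
  assert (Hy : y = Cexp_pr (RtoC (2 * PI * INR d / INR q) * Ci)).
  { unfold y. rewrite Hdec at 1. rewrite plus_INR, mult_INR.
    replace (RtoC (2 * PI * (INR q * INR c + INR d) / INR q) * Ci) with
      (RtoC (2 * PI * INR c) * Ci + RtoC (2 * PI * INR d / INR q) * Ci).
    - rewrite Cexp_add, Cexp_2PI_nat. ring.
    - rewrite <- Cmult_plus_distr_r, <- RtoC_plus. f_equal. f_equal. field. auto. }
  destruct (Nat.eqb_spec d 0) as [Hd|Hd].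
  - assert (y = 1) as Hy1.
    { rewrite Hy, Hd. replace (RtoC (2 * PI * INR 0 / INR q) * Ci) with (RtoC 0).
      - apply Cexp_0.
      - simpl. replace (2 * PI * 0 / INR q)%R with 0%R by (field; auto).
        unfold Cmult, RtoC; simpl. f_equal; ring. }
    assert (P1 : forall k, pow_n y k = RtoC 1).
    { rewrite Hy1. clear. induction k as [|x IH]; [reflexivity|].
      change (RtoC 1 * pow_n (RtoC 1) x = RtoC 1). rewrite IH. ring. }
    rewrite (sum_n_ext _ _ _ P1), sum_n_const_C. replace (S (q - 1)) with q by lia. toC. ring.
  - assert (Hyq : pow_n y q = RtoC 1).
    { unfold y. rewrite <- Cexp_nat. rewrite <- (Cexp_2PI_nat M). f_equal.
      rewrite Cmult_assoc, <- RtoC_mult. f_equal. f_equal. field. auto. }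
    assert (Hy1 : 1 - y <> 0).
    { intros E. assert (Ey : y = 1) by (rewrite <- (Cplus_0_l y), <- E; ring).
      rewrite Hy in Ey. unfold Cexp_pr, Cmult, RtoC, Ci in Ey; simpl in Ey.
      replace (2 * PI * INR d / INR q * 0 - 0 * 1)%R with 0%R in Ey by ring.
      replace (2 * PI * INR d / INR q * 1 + 0 * 0)%R with (2 * PI * INR d / INR q)%R in Ey by ring.
      rewrite exp_0, !Rmult_1_l in Ey. injection Ey as Ec Es.
      set (phi := (2 * PI * INR d / INR q)%R) in *.
      assert (Hd1 : (1 <= INR d)%R) by (apply (le_INR 1); lia).
      assert (Hdq : (INR d < INR q)%R) by (apply lt_INR; lia).
      assert (Hqp : (0 < INR q)%R) by lra.
      assert (Hphi0 : (0 < phi)%R).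
      { unfold phi. apply Rdiv_lt_0_compat; auto. pose proof PI_RGT_0. nra. }
      assert (Hphi1 : (phi < 2 * PI)%R).
      { unfold phi. apply (Rmult_lt_reg_r (INR q)); auto. unfold Rdiv.
        rewrite Rmult_assoc, Rinv_l by auto. pose proof PI_RGT_0. nra. }
      destruct (sin_eq_O_2PI_0 phi ltac:(lra) ltac:(lra) Es) as [E1|[E1|E1]]; try lra.
      rewrite E1, cos_PI in Ec. lra. }
    assert (H := geom_finite y (q - 1)). replace (S (q - 1)) with q in H by lia.
    rewrite Hyq in H. replace (1 - 1) with (RtoC 0) in H by ring.
    assert (G : forall S0 : C, S0 * (1 - y) = RtoC 0 -> S0 = RtoC 0).
    { intros S0 HS. transitivity (S0 * (1 - y) * / (1 - y)). { field. auto. }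
      rewrite HS. ring. }
    apply G. exact H.
Qed.

Lemma series_sum_n (f : nat -> nat -> C) (L : nat -> C) N :
  (forall k, (k <= N)%nat -> is_series (f k) (L k)) ->
  is_series (fun l => sum_n (fun k => f k l) N) (sum_n L N).
Proof.
  induction N as [|N IH]; intros H.
  - rewrite sum_O. eapply is_series_ext; [|apply (H 0%nat ltac:(lia))]. intros l. rewrite sum_O. reflexivity.
  - rewrite sum_Sn. eapply is_series_ext; [|apply (@is_series_plus C_AbsRing C_NormedModule); [apply IH; intros; apply H; lia|apply (H (S N) ltac:(lia))]].
    intros l. rewrite sum_Sn. reflexivity.
Qed.

Lemma sparse0 (q : nat) (e b : nat -> C) (S0 : C) : (1 <= q)%nat ->
  (forall m j, (j < q)%nat -> e (q * m + j)%nat = if Nat.eqb j 0 then b m else RtoC 0) ->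
  is_series e S0 -> is_series b S0.
Proof.
  intros Hq He Hb.
  assert (Hp : forall m j, (j < q)%nat -> sum_n e (q * m + j) = sum_n b m).
  { intros m. induction m as [|m IHm]; intros j; induction j as [|j IHj]; intros Hj.
    - replace (q * 0 + 0)%nat with 0%nat by lia. rewrite !sum_O.
      pose proof (He 0%nat 0%nat ltac:(lia)) as E. simpl in E.
      replace (q * 0 + 0)%nat with 0%nat in E by lia. exact E.
    - replace (q * 0 + S j)%nat with (S (q * 0 + j)) by lia. rewrite sum_Sn, IHj by lia.
      replace (S (q * 0 + j)) with (q * 0 + S j)%nat by lia. rewrite He by lia. simpl.
      change (Cplus (sum_n b 0) (RtoC 0) = sum_n b 0). ring.
    - replace (q * S m + 0)%nat with (S (q * m + (q - 1))) by lia. rewrite sum_Sn, IHm by lia.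
      replace (S (q * m + (q - 1))) with (q * S m + 0)%nat by lia. rewrite He by lia. simpl.
      rewrite sum_Sn. reflexivity.
    - replace (q * S m + S j)%nat with (S (q * S m + j)) by lia. rewrite sum_Sn, IHj by lia.
      replace (S (q * S m + j)) with (q * S m + S j)%nat by lia. rewrite He by lia. simpl.
      change (Cplus (sum_n b (S m)) (RtoC 0) = sum_n b (S m)). ring. }
  unfold is_series.
  apply (filterlim_ext (fun m => sum_n e (q * m + 0)%nat)). { intros; apply Hp; lia. }
  apply filterlim_comp with (G := eventually); [|exact Hb].
  intros P [N0 HP]. exists N0. intros n Hn. apply HP. nia.
Qed.

Lemma sparse (q s : nat) (d b : nat -> C) (S0 : C) : (s < q)%nat ->
  (forall m j, (j < q)%nat -> d (q * m + j)%nat = if Nat.eqb j s then b m else RtoC 0) ->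
  is_series d S0 -> is_series b S0.
Proof.
  intros Hs Hd Hb.
  assert (He : forall m j, (j < q)%nat -> d (s + (q * m + j))%nat = if Nat.eqb j 0 then b m else RtoC 0).
  { intros m j Hj. destruct (Nat.lt_ge_cases (s + j) q) as [H|H].
    - replace (s + (q * m + j))%nat with (q * m + (s + j))%nat by lia. rewrite Hd by lia.
      destruct (Nat.eqb_spec (s + j) s); destruct (Nat.eqb_spec j 0); try reflexivity; lia.
    - replace (s + (q * m + j))%nat with (q * S m + (s + j - q))%nat by lia. rewrite Hd by lia.
      destruct (Nat.eqb_spec (s + j - q) s); destruct (Nat.eqb_spec j 0); try reflexivity; lia. }
  apply (sparse0 q (fun l => d (s + l)%nat) b S0 ltac:(lia) He).
  destruct s as [|s].
  - eapply is_series_ext; [|exact Hb]. intros l. reflexivity.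
  - apply (is_series_incr_n d (S s) S0 ltac:(lia)).
    assert (Z : sum_n d (Init.Nat.pred (S s)) = RtoC 0).
    { rewrite (sum_n_ext_loc _ (fun _ => RtoC 0)).
      - rewrite sum_n_const_C. toC. ring.
      - intros k Hk. simpl in Hk. replace k with (q * 0 + k)%nat by lia. rewrite Hd by lia.
        destruct (Nat.eqb_spec k (S s)); [lia|reflexivity]. }
    match goal with |- is_series _ ?L => replace L with S0 end. exact Hb.
    change (S0 = S0 + (sum_n d (Init.Nat.pred (S s)))). rewrite Z. ring.
Qed.

Lemma RtoC_nz (x : R) : (x <> 0)%R -> RtoC x <> 0.
Proof. intros H E. injection E as E. auto. Qed.

Lemma pow_n_nz (z : C) k : z <> RtoC 0 -> pow_n z k <> RtoC 0.
Proof.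
  intros Hz. induction k as [|k IH].
  - change (RtoC 1 <> RtoC 0). apply RtoC_nz. lra.
  - change (z * pow_n z k <> RtoC 0). apply Cmult_neq_0; auto.
Qed.

Lemma pow_n_add_C (z : C) a b : pow_n z (a + b) = pow_n z a * pow_n z b.
Proof. apply (@pow_n_plus C_Ring). Qed.

Lemma pow_n_mul_C (w : C) a b : pow_n (pow_n w a) b = pow_n w (a * b).
Proof.
  induction b as [|b IH].
  - rewrite Nat.mul_0_r. reflexivity.
  - change (pow_n w a * pow_n (pow_n w a) b = pow_n w (a * S b)). rewrite IH, <- pow_n_add_C.
    f_equal. lia.
Qed.

Lemma sum_n_shift_l (f : nat -> C) N : sum_n f (S N) = f 0%nat + sum_n (fun k => f (S k)) N.
Proof.
  induction N as [|N IH].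
  - rewrite sum_Sn, !sum_O. reflexivity.
  - rewrite sum_Sn, IH, sum_Sn. change (f 0%nat + sum_n (fun k => f (S k)) N + f (S (S N)) =
      f 0%nat + (sum_n (fun k => f (S k)) N + f (S (S N)))). ring.
Qed.

Lemma sum_n_rev (f : nat -> C) N : sum_n f N = sum_n (fun k => f (N - k)%nat) N.
Proof.
  revert f. induction N as [|N IH]; intros f.
  - rewrite !sum_O. reflexivity.
  - rewrite sum_Sn, sum_n_shift_l, (IH f).
    change (sum_n (fun k => f (N - k)%nat) N + f (S N) = f (S N - 0)%nat + sum_n (fun k => f (N - k)%nat) N).
    replace (S N - 0)%nat with (S N) by lia. ring.
Qed.

Lemma mod_case (q p m j : nat) : (1 <= p)%nat -> (p < q)%nat -> (j < q)%nat ->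
  Nat.eqb ((S (q * m + j) + q - p) mod q) 0 = Nat.eqb j (p - 1).
Proof.
  intros H1 H2 H3.
  replace (S (q * m + j) + q - p)%nat with ((j + 1 + q - p) + m * q)%nat by lia.
  rewrite Nat.Div0.mod_add.
  destruct (Nat.lt_trichotomy j (p - 1)) as [H|[H|H]].
  - rewrite Nat.mod_small by lia.
    destruct (Nat.eqb_spec (j + 1 + q - p) 0); destruct (Nat.eqb_spec j (p - 1)); lia.
  - replace (j + 1 + q - p)%nat with q by lia. rewrite Nat.Div0.mod_same.
    destruct (Nat.eqb_spec j (p - 1)); [reflexivity|lia].
  - replace (j + 1 + q - p)%nat with ((j + 1 - p) + 1 * q)%nat by lia.
    rewrite Nat.Div0.mod_add, Nat.mod_small by lia.
    destruct (Nat.eqb_spec (j + 1 - p) 0); destruct (Nat.eqb_spec j (p - 1)); lia.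
Qed.

Lemma rot (p q l k : nat) : (1 <= q)%nat -> (p <= S l + q)%nat ->
  Cexp_pr (RtoC (- (2 * PI * INR p * INR k / INR q))%R * Ci)
    * pow_n (Cexp_pr (RtoC (2 * PI * INR k / INR q)%R * Ci)) (S l)
  = Cexp_pr (RtoC (2 * PI * INR k * INR (S l + q - p) / INR q)%R * Ci).
Proof.
  intros Hq Hp. assert (Hq0 : INR q <> 0%R) by (apply not_0_INR; lia).
  rewrite <- Cexp_nat, <- Cexp_add.
  transitivity (Cexp_pr (RtoC (- (2 * PI * INR p * INR k / INR q))%R * Ci + RtoC (INR (S l)) * (RtoC (2 * PI * INR k / INR q)%R * Ci))
     * Cexp_pr (RtoC (2 * PI * INR k) * Ci)).
  { rewrite Cexp_2PI_nat. ring. }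
  rewrite <- Cexp_add. f_equal.
  rewrite minus_INR by lia. rewrite plus_INR.
  unfold Cmult, Cplus, RtoC, Ci; simpl. f_equal; field; auto.
Qed.

Lemma sum_n_mult_l_C (a : C) (u : nat -> C) N : sum_n (fun k => a * u k) N = a * sum_n u N.
Proof. apply (@sum_n_mult_l C_Ring). Qed.

Lemma sum_n_opp_C (f : nat -> C) N : sum_n (fun k => - f k) N = - sum_n f N.
Proof.
  induction N as [|N IH].
  - rewrite !sum_O. reflexivity.
  - rewrite !sum_Sn, IH. change (- sum_n f N + - f (S N) = - (sum_n f N + f (S N))). ring.
Qed.

Theorem theorem2 (n p q : nat) (z : C) :
  (1 <= n)%nat -> (1 <= p)%nat -> (p < q)%nat ->
  (0 < Cmod z)%R -> (Cmod z < 1)%R ->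
  let r : R := (INR p / INR q)%R in
  let nu : C := RtoC (- INR n + r)%R in
  is_series (B_term nu z)
    ( - sum_n (fun k : nat =>
          Cexp_pr (RtoC (- (2 * PI * INR p * INR k / INR q))%R * Ci)
          * Clog_pr (1 - Cpow_pr z (RtoC (/ INR q)%R)
                      * Cexp_pr (RtoC (2 * PI * INR k / INR q)%R * Ci)))
        (q - 1)
      + sum_n (fun j : nat =>
          let k := S j in
          Cpow_pr z (RtoC r) * / pow_n z k / (RtoC r - RtoC (INR k)))
        (n - 1)).
Proof.
  intros Hn Hp Hpq Hz0 Hz1 r nu.
  assert (Hz : z <> RtoC 0) by (intro E; rewrite E, Cmod_0 in Hz0; lra).
  assert (Hq0 : INR q <> 0%R) by (apply not_0_INR; lia).
  assert (Hqp : (0 < INR q)%R) by (apply lt_0_INR; lia).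
  assert (Hpp : (1 <= INR p)%R) by (apply (le_INR 1); lia).
  assert (Hpq' : (INR p < INR q)%R) by (apply lt_INR; lia).
  assert (Hr0 : (0 < r < 1)%R).
  { unfold r. split. apply Rdiv_lt_0_compat; lra.
    apply (Rmult_lt_reg_r (INR q)); auto. unfold Rdiv. rewrite Rmult_assoc, Rinv_l; lra. }
  set (L := Clog_pr z).
  set (w := Cpow_pr z (RtoC (/ INR q))).
  assert (Hw : w = Cexp_pr (RtoC (/ INR q) * L)).
  { unfold w, Cpow_pr. destruct (Ceq_dec z 0); [contradiction|reflexivity]. }
  assert (Hwq : pow_n w q = z).
  { rewrite Hw, <- Cexp_nat. rewrite Cmult_assoc, <- RtoC_mult, Rinv_r by auto.
    rewrite Cmult_1_l. apply Cexp_Clog. auto. }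
  assert (Hwp : Cpow_pr z (RtoC r) = pow_n w p).
  { unfold Cpow_pr. destruct (Ceq_dec z 0); [contradiction|]. rewrite Hw, <- Cexp_nat. f_equal.
    fold L. rewrite Cmult_assoc, <- RtoC_mult. unfold r. reflexivity. }
  assert (Hnu : Cpow_pr z nu = pow_n w p / pow_n z n).
  { assert (Hzn : pow_n z n = Cexp_pr (RtoC (INR n) * L)) by (rewrite Cexp_nat; unfold L; rewrite Cexp_Clog; auto).
    assert (E : Cpow_pr z nu * pow_n z n = pow_n w p).
    { rewrite <- Hwp. unfold Cpow_pr. destruct (Ceq_dec z 0); [contradiction|]. fold L.
      rewrite Hzn, <- Cexp_add. f_equal. unfold nu. rewrite RtoC_plus, RtoC_opp. ring. }
    rewrite <- E. field. apply pow_n_nz; auto. }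
  assert (Hwm : (Cmod w < 1)%R).
  { rewrite Hw, Cmod_Cexp. unfold L, Clog_pr, Re, RtoC, Cmult; simpl.
    rewrite <- exp_0. apply exp_increasing.
    assert (ln (Cmod z) < 0)%R by (rewrite <- ln_1; apply ln_increasing; auto).
    assert (0 < / INR q)%R by (apply Rinv_0_lt_compat; auto). nra. }
  set (T := - sum_n (fun k : nat =>
          Cexp_pr (RtoC (- (2 * PI * INR p * INR k / INR q))%R * Ci)
          * Clog_pr (1 - Cpow_pr z (RtoC (/ INR q)%R)
                      * Cexp_pr (RtoC (2 * PI * INR k / INR q)%R * Ci)))
        (q - 1)).
  set (S2 := sum_n (fun j : nat =>
          let k := S j in
          Cpow_pr z (RtoC r) * / pow_n z k / (RtoC r - RtoC (INR k)))
        (n - 1)).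
  assert (Hfin : sum_n (B_term nu z) (Init.Nat.pred n) = S2).
  { replace (Init.Nat.pred n) with (n - 1)%nat by lia. unfold S2. rewrite sum_n_rev.
    apply sum_n_ext_loc. intros k Hk. cbv zeta. unfold B_term.
    set (i := (n - 1 - k)%nat).
    assert (Hni : n = (i + S k)%nat) by (unfold i; lia).
    rewrite Hnu, Hwp, Hni, pow_n_add_C.
    replace (RtoC (INR i) + nu) with (RtoC r - RtoC (INR (S k))).
    2:{ unfold nu. rewrite Hni, plus_INR. rewrite <- RtoC_minus, <- RtoC_plus. f_equal. ring. }
    assert (Hd : RtoC r - RtoC (INR (S k)) <> 0).
    { rewrite <- RtoC_minus. apply RtoC_nz. rewrite S_INR. pose proof (pos_INR k). lra. }
    assert (H1 := pow_n_nz z i Hz). assert (H2 := pow_n_nz z (S k) Hz).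
    toC. field. auto. }
  apply (is_series_decr_n _ n); [lia|].
  match goal with |- is_series _ ?LL => replace LL with T end.
  2:{ change (T = (T + S2) + - sum_n (B_term nu z) (Init.Nat.pred n)). rewrite Hfin. ring. }
  set (s := (p - 1)%nat).
  set (b := fun m : nat => RtoC (INR q) * (pow_n w (S (q * m + s)) / RtoC (INR (S (q * m + s))))).
  set (om := fun k : nat => Cexp_pr (RtoC (2 * PI * INR k / INR q)%R * Ci)).
  set (ek := fun k : nat => Cexp_pr (RtoC (- (2 * PI * INR p * INR k / INR q))%R * Ci)).
  set (d := fun l : nat => sum_n (fun k => ek k * (pow_n (w * om k) (S l) / RtoC (INR (S l)))) (q - 1)).
  assert (Hb : forall m, b m = B_term nu z (n + m)).
  { intros m. unfold b, B_term. rewrite Hnu, pow_n_add_C.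
    replace (S (q * m + s)) with (q * m + p)%nat by (unfold s; lia).
    rewrite pow_n_add_C, <- pow_n_mul_C, Hwq.
    replace (RtoC (INR (n + m)) + nu) with (RtoC (INR m) + RtoC (INR p) / RtoC (INR q)).
    2:{ unfold nu, r. rewrite plus_INR, <- RtoC_div by auto. rewrite <- !RtoC_plus. f_equal. ring. }
    rewrite plus_INR, mult_INR, RtoC_plus, RtoC_mult.
    assert (Hm : RtoC (INR m) * RtoC (INR q) + RtoC (INR p) <> 0).
    { rewrite <- RtoC_mult, <- RtoC_plus. apply RtoC_nz. pose proof (pos_INR m). nra. }
    assert (Hm' : RtoC (INR m) + RtoC (INR p) / RtoC (INR q) <> 0).
    { rewrite <- RtoC_div, <- RtoC_plus by auto. apply RtoC_nz. pose proof (pos_INR m).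
      assert (0 < INR p / INR q)%R by (apply Rdiv_lt_0_compat; lra). lra. }
    assert (H1 := pow_n_nz z n Hz). assert (Hq' : RtoC (INR q) <> 0) by (apply RtoC_nz; auto).
    toC. field. split; [auto|split; auto]. }
  apply (is_series_ext b). { exact Hb. }
  apply (sparse q s d b T). { unfold s; lia. }
  - intros m j Hj. unfold d.
    set (l := (q * m + j)%nat).
    rewrite (sum_n_ext_loc _ (fun k => (pow_n w (S l) / RtoC (INR (S l))) *
        Cexp_pr (RtoC (2 * PI * INR k * INR (S l + q - p) / INR q)%R * Ci))).
    2:{ intros k Hk. unfold ek, om. rewrite <- rot by lia. rewrite pow_n_mult_C. set (P1 := pow_n w (S l)). set (P2 := pow_n (Cexp_pr (RtoC (2 * PI * INR k / INR q)%R * Ci)) (S l)). unfold Cdiv. toC. ring. }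
    rewrite sum_n_mult_l_C, root_sum by lia. unfold l. rewrite mod_case by lia. fold s.
    destruct (Nat.eqb_spec j s) as [E|E].
    + subst j. unfold b. toC. ring.
    + toC. ring.
  - assert (HT : T = sum_n (fun k => ek k * (- Clog_pr (1 - w * om k))) (q - 1)).
    { change T with (- sum_n (fun k => ek k * Clog_pr (1 - w * om k)) (q - 1)).
      rewrite <- sum_n_opp_C. apply sum_n_ext. intros k. toC. ring. }
    rewrite HT. unfold d. apply series_sum_n. intros k Hk.
    assert (Hom : (Cmod (w * om k) < 1)%R).
    { rewrite Cmod_mult. unfold om. rewrite Cmod_Cexp.
      replace (Re (RtoC (2 * PI * INR k / INR q) * Ci)) with 0%R by (unfold Re, RtoC, Ci, Cmult; simpl; ring).
      rewrite exp_0. lra. }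
    eapply is_series_ext; [|apply (@is_series_scal C_AbsRing C_NormedModule (ek k)), (log_series _ Hom)].
    intros l. reflexivity.
Qed.
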